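(* Let $n=p_1p_2\cdots p_r$, where $r\geq 3$ and $p_1<p_2<\cdots<p_r$ are primes, and let $3\leq s\leq r$. Then $\deg(p_{s-1}p_s\cdots p_r)\geq\deg(p_sp_{s+1}\cdots p_r)$ in $\mathcal{P}(C_n)$ if and only if $$p_sp_{s+1}\cdots p_r\geq\left(\frac{p_1p_2\cdots p_{s-2}}{\phi(p_1p_2\cdots p_{s-2})}-1\right)\phi(p_{s-1})+1. \qquad ( * )$$ Further, $\deg(p_{s-1}p_s\cdots p_r)=\deg(p_sp_{s+1}\cdots p_r)$ if and only if equality holds in $( * )$.
   Context: For a finite group $G$, the power graph $\mathcal{P}(G)$ is the simple undirected graph with vertex set $G$ in which two distinct vertices are adjacent if one is an integral power of the other. $C_n$ denotes the cyclic group of order $n$, identified with $\mathbb{Z}_n=\{0,1,\ldots,n-1\}$, so a positive divisor $d<n$ of $n$ is regarded as the element $d\in\mathbb{Z}_n$. $\deg(a)$ is the degree of vertex $a$ in $\mathcal{P}(C_n)$ and $\phi$ is Euler's totient function. *)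

(* Defs.v *)
From mathcomp Require Import all_boot all_order all_algebra.
Set Implicit Arguments. Unset Strict Implicit. Unset Printing Implicit Defensive.

(* C_n is identified with Z_n = {0,...,n-1} (type 'I_n), written additively.
   An "integral power" x^k of x is then k*x mod n; since this only depends on
   k mod n, it suffices to let k range over 0..n-1 (this covers all k in Z). *)
Definition is_power (n : nat) (x y : 'I_n) : bool :=
  [exists k : 'I_n, nat_of_ord y == (k * x) %% n].

Definition pg_adj (n : nat) (x y : 'I_n) : bool :=
  (x != y) && (is_power x y || is_power y x).

Definition pg_deg (n a : nat) : nat :=
  #|[set y : 'I_n | [exists x : 'I_n, (nat_of_ord x == a %% n) && pg_adj x y]]|.

(* Main.v *)
Require Import Defs.
From mathcomp Require Import all_boot all_order all_algebra.
Import Order.TTheory GRing.Theory Num.Theory.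

Lemma prod_nat_ind (K : nat -> Prop) a b (F : nat -> nat) :
  K 1 -> (forall x y, K x -> K y -> K (x * y)) ->
  (forall j, a <= j < b -> K (F j)) -> K (\prod_(a <= j < b) F j).
Proof.
move=> K1 KM KF; rewrite big_nat_cond; apply: big_ind => //.
by move=> i /andP[] /KF.
Qed.

Lemma count_blocks (f : pred nat) k a :
  count f (iota 0 (k * a)) = \sum_(0 <= t < k) count f (iota (t * a) a).
Proof.
elim: k => [|k IH]; first by rewrite big_geq.
by rewrite mulSnr iotaD count_cat IH big_nat_recr //= add0n.
Qed.

Lemma count_shift (f : pred nat) b c :
  count f (iota b c) = count (fun i => f (b + i)) (iota 0 c).
Proof. by rewrite -{1}(addn0 b) iotaDl count_map. Qed.

Lemma count_dvd_block a t (g : pred nat) : 0 < a ->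
  count (fun y => (a %| y) && g y) (iota (t * a) a) = g (t * a).
Proof.
move=> a0; rewrite count_shift.
rewrite (eq_count (a2 := fun i => (a %| i) && g (t * a + i))); last first.
  by move=> i /=; rewrite dvdn_addr ?dvdn_mull.
case: a a0 => // a _ /=; rewrite addn0.
  idtac.
rewrite (eq_in_count (a2 := pred0)); first by rewrite count_pred0 addn0.
move=> i; rewrite mem_iota => /andP[i1 i2] /=.
by rewrite gtnNdvd.
Qed.

Lemma count_cop_block m t : 
  count (fun y => coprime y m) (iota (t * m) m) = totient m.
Proof.
rewrite count_shift totient_count_coprime -sum1_count big_mkcond /=.
rewrite /index_iota subn0; apply: eq_bigr => i _.
by rewrite -coprime_modl modnMDl coprime_modl coprime_sym.
Qed.

Lemma dvdn_modH d x n : d %| x -> d %| n -> d %| x %% n.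
Proof. by move=> dx dn; move: dx; rewrite {1}(divn_eq x n) dvdn_addr // dvdn_mull. Qed.

Lemma is_power_l n (a y : 'I_n) : 0 < a -> a %| n -> is_power a y = (a %| y).
Proof.
move=> a0 an; apply/existsP/idP => [[k /eqP ->]|ay].
  by apply: dvdn_modH; [apply: dvdn_mull|].
have lt : y %/ a < n by apply: leq_ltn_trans (leq_div _ _) (ltn_ord y).
by exists (Ordinal lt); rewrite /= divnK // modn_small.
Qed.

Lemma is_power_r n m (y a : 'I_n) : n = a * m -> coprime a m -> 1 < m ->
  is_power y a = coprime y m.
Proof.
move=> nE cam m1; apply/existsP/idP => [[k /eqP Ha]|cym].
  have g1 : gcdn y m %| gcdn a m.
    rewrite dvdn_gcd dvdn_gcdr andbT Ha.
    have gn : gcdn y m %| n.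
      by apply: dvdn_trans (dvdn_gcdr y m) _; rewrite nE dvdn_mull.
    have gk : gcdn y m %| k * y by rewrite dvdn_mull // dvdn_gcdl.
    exact: dvdn_modH.
  by move: g1; rewrite (eqP cam) dvdn1.
have y0 : 0 < y.
  case: (posnP y) cym => // ->; rewrite /coprime gcd0n => /eqP m1E.
  by rewrite m1E in m1.
have n0 : 0 < n by apply: leq_ltn_trans (ltn_ord y).
have ga : gcdn y n %| a.
  have : gcdn y (a * m) %| a by rewrite mulnC Gauss_gcdr // dvdn_gcdr.
  by rewrite -nE.
case: (egcdnP n y0) => km kn Hk _.
have lt : (km * (a %/ gcdn y n)) %% n < n by rewrite ltn_pmod.
exists (Ordinal lt); apply/eqP => /=.
rewrite modnMml mulnAC mulnC Hk mulnDr divnK // mulnA modnMDl modn_small //.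
Qed.

Lemma pg_deg_formula n a m : 0 < a -> n = a * m -> coprime a m -> 1 < m ->
  pg_deg n a + totient m + 1 = m + a * totient m.
Proof.
move=> a0 nE cam m1.
have an : a < n by rewrite nE -{1}(muln1 a) ltn_pmul2l.
have dan : a %| n by rewrite nE dvdn_mulr.
pose R := fun y : nat => (a %| y) || coprime y m.
have -> : pg_deg n a = count (fun y => (y != a) && R y) (iota 0 n).
  rewrite /pg_deg cardE /enum_mem size_filter -val_enum_ord count_map enumT.
  apply: eq_count => y /=; rewrite inE.
  have hl : is_power (Ordinal an) y = (a %| y).
    exact: (@is_power_l n (Ordinal an) y a0 dan).
  have hr : is_power y (Ordinal an) = coprime y m.
    exact: (@is_power_r n m y (Ordinal an) nE cam m1).
  have ne : (Ordinal an != y) = (y != a :> nat) by rewrite eq_sym.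
  apply/existsP/idP => [[x /andP[/eqP xa]]|H].
    have xE : x = Ordinal an by apply: val_inj => /=; rewrite xa modn_small.
    by rewrite xE /pg_adj ne hl hr.
  exists (Ordinal an); rewrite /= modn_small // eqxx /= /pg_adj.
  by rewrite ne hl hr.
have Ra : R a by rewrite /R dvdnn.
have c1 : count (fun y => (y == a) && R y) (iota 0 n) = 1.
  rewrite (eq_count (a2 := pred1 a)); last first.
    by move=> y /=; case: eqP => // ->.
  by rewrite count_uniq_mem ?iota_uniq // mem_iota /= an.
have split1 := count_predUI (fun y => (y != a) && R y) (fun y => (y == a) && R y) (iota 0 n).
rewrite (eq_count (a1 := predI _ _) (a2 := pred0)) ?count_pred0 in split1; last first.
  by move=> y /=; case: (y == a); rewrite /= ?andbF.
rewrite (eq_count (a1 := predU _ _) (a2 := R)) in split1; last first.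
  by move=> y /=; case: (boolP (y == a)) => [/eqP ->|_]; rewrite /= ?Ra ?orbF.
rewrite c1 addn0 in split1; rewrite addnAC -split1.
have split2 := count_predUI (fun y => a %| y) (fun y => coprime y m) (iota 0 n).
rewrite -/(count R _) in split2.
have e1 : count (fun y => a %| y) (iota 0 n) = m.
  rewrite nE mulnC count_blocks.
  rewrite (eq_big_nat _ _ (F2 := fun _ => 1)); first by rewrite sum_nat_const_nat muln1 subn0.
  move=> t _; rewrite (eq_count (a2 := fun y => (a %| y) && true)) ?count_dvd_block //.
  by move=> y; rewrite andbT.
have e2 : count (fun y => coprime y m) (iota 0 n) = a * totient m.
  rewrite nE count_blocks.
  rewrite (eq_big_nat _ _ (F2 := fun _ => totient m)); first by rewrite sum_nat_const_nat subn0.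
  by move=> t _; rewrite count_cop_block.
have e3 : count (predI (fun y => a %| y) (fun y => coprime y m)) (iota 0 n) = totient m.
  rewrite nE mulnC count_blocks.
  rewrite (eq_big_nat _ _ (F2 := fun t => nat_of_bool (coprime t m))); last first.
    move=> t _; rewrite count_dvd_block // coprimeMl cam andbT //.
  rewrite totient_count_coprime.
  by apply: eq_bigr => i _; rewrite coprime_sym.
rewrite e1 e2 e3 in split2.
by rewrite -split2; rewrite /R; congr (_ + _); apply: eq_count.
Qed.

From mathcomp Require Import ring lra zify.

Lemma coprime_prod_r x a b (F : nat -> nat) :
  (forall j, a <= j < b -> coprime x (F j)) -> coprime x (\prod_(a <= j < b) F j).
Proof.
move=> H; apply: (@prod_nat_ind (fun y => coprime x y)) => //.
  exact: coprimen1.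
by move=> u v cu cv; rewrite coprimeMr cu cv.
Qed.

Theorem lemma3p2 (r s : nat) (p : nat -> nat)
  (hr : 3 <= r)
  (hprime : forall i, 1 <= i <= r -> prime (p i))
  (hinc : forall i, 1 <= i < r -> p i < p i.+1)
  (hs : 3 <= s <= r) :
  let n := \prod_(1 <= i < r.+1) p i in
  let A := \prod_(s.-1 <= i < r.+1) p i in
  let B := \prod_(s <= i < r.+1) p i in
  let P := \prod_(1 <= i < s.-1) p i in
  let rhs : rat :=
    ((P%:R / (totient P)%:R - 1) * (totient (p s.-1))%:R + 1)%R in
  (pg_deg n B <= pg_deg n A <-> (rhs <= (B%:R : rat))%R) /\
  (pg_deg n A = pg_deg n B <-> (B%:R : rat) = rhs).
Proof.
move=> n A B P rhs.
case/andP: hs => s3 sr.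
have mono : forall i j, 1 <= i -> i < j -> j <= r -> p i < p j.
  move=> i j i1; elim: j => // j IH ij jr.
  rewrite ltnS leq_eqVlt in ij; case/orP: ij => [/eqP eij|ij].
    by rewrite eij; apply: hinc; rewrite jr -eij i1.
  apply: ltn_trans (IH ij (ltnW jr)) (hinc j _).
  by rewrite jr andbT; apply: leq_trans i1 (ltnW ij).
have cop : forall i j, 1 <= i <= r -> 1 <= j <= r -> i != j -> coprime (p i) (p j).
  move=> i j /andP[i1 ir] /andP[j1 jr] ij.
  rewrite prime_coprime ?hprime ?i1 // dvdn_prime2 ?hprime ?i1 ?j1 //.
  case: (ltngtP i j) ij => // [lt|lt] _.
    by rewrite neq_ltn mono.
  by rewrite neq_ltn (mono j i) ?orbT.
have s1 : s.-1.+1 = s by rewrite prednK // (leq_trans _ s3).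
have nE : n = P * A.
  by rewrite /n /P /A (big_cat_nat _ (n := s.-1)) //=; lia.
have AE : A = p s.-1 * B.
  by rewrite /A big_ltn ?s1 //; lia.
have Bpos : 0 < B.
  apply: (@prod_nat_ind (fun x => 0 < x)) => //; first by move=> x y; rewrite muln_gt0 => ->.
  move=> j jr; apply: prime_gt0; apply: hprime; lia.
have P1 : 1 < P.
  rewrite /P big_ltn; last by lia.
  have h1 : 1 < p 1 by apply: prime_gt1; apply: hprime; lia.
  have h2 : 0 < \prod_(2 <= i < s.-1) p i.
    apply: (@prod_nat_ind (fun x => 0 < x)) => //; first by move=> x y; rewrite muln_gt0 => ->.
    move=> j jr; apply: prime_gt0; apply: hprime; lia.
  by apply: leq_trans h1 _; rewrite leq_pmulr.
have qprime : prime (p s.-1) by apply: hprime; lia.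
have copPA : coprime P A.
  apply: coprime_prod_r => j jr; rewrite coprime_sym.
  apply: coprime_prod_r => i ir; apply: cop; lia.
have copPq : coprime P (p s.-1) by move: copPA; rewrite AE coprimeMr => /andP[].
have copPqB : coprime (P * p s.-1) B.
  rewrite coprimeMl; apply/andP; split.
    by move: copPA; rewrite AE coprimeMr => /andP[].
  apply: coprime_prod_r => i ir; apply: cop; lia.
have hA := pg_deg_formula n A P.
have hB := pg_deg_formula n B (P * p s.-1).
have Apos : 0 < A by rewrite AE muln_gt0 prime_gt0.

move: hA => /(_ Apos); rewrite mulnC -nE => /(_ erefl); rewrite coprime_sym copPA => /(_ isT P1) hA.
have q1 : 1 < p s.-1 by apply: prime_gt1.
move: hB => /(_ Bpos); rewrite mulnC -mulnA -AE -nE => /(_ erefl).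
rewrite coprime_sym copPqB => /(_ isT).
have Pq1 : 1 < P * p s.-1 by rewrite (leq_trans q1) // leq_pmull // ltnW.
move=> /(_ Pq1) hB.
rewrite totient_coprime // (totient_prime qprime) in hB.
have qE : p s.-1 = (p s.-1).-1.+1 by rewrite prednK // ltnW.
have rhsE : rhs = ((P%:R / (totient P)%:R - 1) * (p s.-1).-1%:R + 1)%R.
  by rewrite /rhs (totient_prime qprime).
clearbody rhs.
set x := pg_deg n A in hA *; set y := pg_deg n B in hB *.
set fP := totient P in hA hB rhsE *; set q := p s.-1 in AE hB qE rhsE *.
set fq := q.-1 in hB qE rhsE *.
have fP0 : (fP%:R : rat) != 0%R by rewrite pnatr_eq0 -lt0n totient_gt0 ltnW.
rewrite AE in hA.
have hA' := congr1 (fun k => k%:R : rat) hA.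
have hB' := congr1 (fun k => k%:R : rat) hB.
rewrite qE -[fq.+1]addn1 /= !natrD !natrM !natrD in hA' hB'.
rewrite /= in hA' hB'.
have key : (x%:R - y%:R : rat)%R = (fP%:R * (B%:R - rhs))%R.
  rewrite rhsE.
  have ex : (x%:R : rat) = (P%:R + (fq%:R + 1) * B%:R * fP%:R - fP%:R - 1)%R.
    by rewrite -hA'; ring.
  have ey : (y%:R : rat) = (P%:R * (fq%:R + 1) + B%:R * (fP%:R * fq%:R) - fP%:R * fq%:R - 1)%R.
    by rewrite -hB'; ring.
  by rewrite ex ey; field.
have fPpos : (0 < (fP%:R : rat))%R by rewrite ltr0n totient_gt0 ltnW.
split.
  rewrite -(ler_nat rat) -subr_ge0 key pmulr_rge0 // subr_ge0.
  by [].
split => [xy|Be].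
  apply/eqP; rewrite -subr_eq0; apply/eqP.
  have : (fP%:R * (B%:R - rhs) = 0 :> rat)%R by rewrite -key xy subrr.
  by move/eqP; rewrite mulf_eq0 (negbTE fP0) /= => /eqP.
apply/eqP; rewrite -(eqr_nat rat) -subr_eq0 key Be subrr mulr0.
by [].
Qed.
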